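(* The assignment $\epsilon_\Gamma$ described in the context is a well-defined functor $\mathcal{G}(E_{\Gamma_S})\to\mathcal{G}(\Gamma_S)$: it is independent of the E-path representing an E-chain, $\epsilon_\Gamma(\mathfrak c)$ is a morphism of $\mathcal G(\Gamma_S)$ from $\mathfrak e_0$ to $\mathfrak e_n$ for $\mathfrak c=(\mathfrak e_0,\dots,\mathfrak e_n)$, it preserves composition, and it is the identity on objects (so its object map is an order isomorphism). Moreover it commutes with restriction: for every E-chain $\mathfrak c$ with domain $\mathfrak e_0$ and every $h\in E$ with $h\,\omega\, e_0$, $\epsilon_\Gamma(\mathfrak h{\downharpoonleft}\mathfrak c)=\mathfrak h{\downharpoonleft}\epsilon_\Gamma(\mathfrak c)$, where $\mathfrak h=(Sh,hS)$ and the right-hand restriction is $(\rho_{hw},\lambda_{w'h})$ if $\epsilon_\Gamma(\mathfrak c)=(\rho_w,\lambda_{w'})$.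
   Context: Let $S$ be a regular semigroup and $E=E(S)$ its set of idempotents. On $E$: $e\,\omega^l f\iff ef=e$, $e\,\omega^r f\iff fe=e$, $\omega=\omega^l\cap\omega^r$; $\mathscr R,\mathscr L$ are Green's relations; $V(x)$ is the set of inverses of $x$. For $e,f\in E$ and $u\in eSf$ let $\rho(e,u,f)\colon Se\to Sf$, $t\mapsto tu$; for $w\in fSe$ let $\lambda(e,w,f)\colon eS\to fS$, $t\mapsto wt$. The groupoid $\mathcal{G}(\Gamma_S)$ has objects $\mathfrak e:=(Se,eS)$, $e\in E$, and morphisms from $(Se,eS)$ to $(Sf,fS)$ the pairs $(\rho_x,\lambda_{x'}):=(\rho(e,x,f),\lambda(e,x',f))$ with $x'\in V(x)$, $xx'=e$, $x'x=f$; composition $(\rho_x,\lambda_{x'})\ast(\rho_y,\lambda_{y'})=(\rho_{xy},\lambda_{y'x'})$; the restriction of $(\rho_x,\lambda_{x'})\colon\mathfrak e\to\mathfrak f$ to $\mathfrak g$ for $g\,\omega\,e$ is $(\rho_{gx},\lambda_{x'g})$. Let $E_{\Gamma_S}=\{(Se,eS):e\in E\}$, given the biordered-set structure transported from $E$ via $e\mapsto\mathfrak e$ (so $\mathfrak e\,\omega^l\,\mathfrak f$ iff $Se\subseteq Sf$, $\mathfrak e\,\omega^r\,\mathfrak f$ iff $eS\subseteq fS$, basic products $\mathfrak e\mathfrak f=(Sef,efS)$ when defined). An E-path is a finite sequence $(e_0,\dots,e_n)$ in $E$ with $e_{i-1}(\mathscr R\cup\mathscr L)e_i$ for all $i$;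 a vertex $e_i$ ($0<i<n$) is inessential if $e_{i-1}\mathscr R e_i\mathscr R e_{i+1}$ or $e_{i-1}\mathscr L e_i\mathscr L e_{i+1}$. E-chains are the classes of E-paths under the equivalence generated by inserting/deleting inessential vertices. $\mathcal G(E_{\Gamma_S})$ is the groupoid with objects $E_{\Gamma_S}$ and morphisms the E-chains $(\mathfrak e_0,\dots,\mathfrak e_n)$ from $\mathfrak e_0$ to $\mathfrak e_n$, with concatenation as composition. For an E-chain $\mathfrak c=(\mathfrak e_0,\dots,\mathfrak e_n)$ and $h\,\omega\, e_0$, $\mathfrak h{\downharpoonleft}\mathfrak c=\mathfrak h\cdot\mathfrak c:=(\mathfrak h,\mathfrak h_0,\mathfrak h_1,\dots,\mathfrak h_n)$ with $h_0=he_0$ and $h_i=e_ih_{i-1}e_i$. Define $\epsilon_\Gamma$ by $\epsilon_\Gamma(\mathfrak e)=\mathfrak e$ on objects and $\epsilon_\Gamma(\mathfrak e_0,\dots,\mathfrak e_n)=(\rho_w,\lambda_{w'})$ where $w=e_0e_1\cdots e_n$ and $w'=e_ne_{n-1}\cdots e_0$. *)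

(* Defs.v *)
From Stdlib Require Import List Relations.
Import ListNotations.
Set Implicit Arguments.

Record RegSemigroup := {
  carrier :> Type;
  mul : carrier -> carrier -> carrier;
  mul_assoc : forall a b c, mul a (mul b c) = mul (mul a b) c;
  regular : forall a, exists b, mul (mul a b) a = a
}.

Section Defs.
Variable S : RegSemigroup.
Local Notation "a * b" := (mul S a b).

Definition idem (e : S) : Prop := e * e = e.

Definition omega_l (e f : S) : Prop := e * f = e.
Definition omega_r (e f : S) : Prop := f * e = e.
Definition omega (e f : S) : Prop := omega_l e f /\ omega_r e f.

(* Green's relations R and L (via principal one-sided ideals of S^1) *)
Definition in_rideal1 (a b : S) : Prop := a = b \/ exists u : S, a = b * u.
Definition in_lideal1 (a b : S) : Prop := a = b \/ exists u : S, a = u * b.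
Definition GreenR (a b : S) : Prop := in_rideal1 a b /\ in_rideal1 b a.
Definition GreenL (a b : S) : Prop := in_lideal1 a b /\ in_lideal1 b a.

Definition is_inverse (x' x : S) : Prop := x * x' * x = x /\ x' * x * x' = x'.

Definition inSe (t e : S) : Prop := exists s : S, t = s * e.
Definition ineS (t e : S) : Prop := exists s : S, t = e * s.
Definition ineSf (t e f : S) : Prop := exists s : S, t = e * s * f.

(* objects (Se, eS): equality of objects *)
Definition obj_eq (e f : S) : Prop :=
  (forall t, inSe t e <-> inSe t f) /\ (forall t, ineS t e <-> ineS t f).

(* Data of a candidate morphism (rho(dom, x, cod), lambda(dom, x', cod)) *)
Record mor := Mor { mdom : S; mcod : S; mx : S; mx' : S }.

Definition is_mor (m : mor) : Prop :=
  idem (mdom m) /\ idem (mcod m) /\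
  ineSf (mx m) (mdom m) (mcod m) /\ ineSf (mx' m) (mcod m) (mdom m) /\
  is_inverse (mx' m) (mx m) /\
  mx m * mx' m = mdom m /\ mx' m * mx m = mcod m.

(* Equality of the pairs (rho, lambda) as maps with domains/codomains:
   rho : S dom -> S cod, t |-> t x ;  lambda : dom S -> cod S, t |-> x' t. *)
Definition mor_eq (m n : mor) : Prop :=
  obj_eq (mdom m) (mdom n) /\ obj_eq (mcod m) (mcod n) /\
  (forall t, inSe t (mdom m) -> t * mx m = t * mx n) /\
  (forall t, ineS t (mdom m) -> mx' m * t = mx' n * t).

Definition mor_comp (m n : mor) : mor :=
  Mor (mdom m) (mcod n) (mx m * mx n) (mx' n * mx' m).

Definition mor_id (e : S) : mor := Mor e e e e.

(* restriction of (rho_x, lambda_x') : e -> f to g (g omega e) *)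
Definition mor_restr (g : S) (m : mor) : mor :=
  Mor g (mx' m * g * mx m) (g * mx m) (mx' m * g).

(* E-paths, represented as (e0, [e1; ...; en]) *)
Definition epath := (S * list S)%type.
Definition full (c : epath) : list S := fst c :: snd c.
Definition elast (c : epath) : S := last (snd c) (fst c).

Fixpoint epath_from (x : S) (l : list S) : Prop :=
  match l with
  | [] => True
  | y :: r => idem y /\ (GreenR x y \/ GreenL x y) /\ epath_from y r
  end.

Definition is_epath (c : epath) : Prop := idem (fst c) /\ epath_from (fst c) (snd c).

Definition inessential_del (c d : epath) : Prop :=
  exists (a b : list S) (x y z : S),
    full c = a ++ [x; y; z] ++ b /\ full d = a ++ [x; z] ++ b /\
    ((GreenR x y /\ GreenR y z) \/ (GreenL x y /\ GreenL y z)).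

Definition echain_step (c d : epath) : Prop :=
  is_epath c /\ is_epath d /\ inessential_del c d.

Definition echain_equiv : relation epath := clos_refl_sym_trans epath echain_step.

(* concatenation of E-chains (assumes elast c = fst d) *)
Definition econcat (c d : epath) : epath := (fst c, snd c ++ snd d).

Fixpoint restr_list (prev : S) (l : list S) : list S :=
  match l with
  | [] => []
  | e :: r => let hi := e * prev * e in hi :: restr_list hi r
  end.

Definition erestr (h : S) (c : epath) : epath :=
  let h0 := h * fst c in (h, h0 :: restr_list h0 (snd c)).

Definition prod_list (x : S) (l : list S) : S := fold_left (mul S) l x.

Definition epsw (c : epath) : S := prod_list (fst c) (snd c).
Definition epsw' (c : epath) : S :=
  match rev (full c) with
  | [] => fst c
  | y :: r => prod_list y r
  end.

Definition eps (c : epath) : mor := Mor (fst c) (elast c) (epsw c) (epsw' c).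

End Defs.
Arguments mor_id {S} e.
Arguments mor_restr {S} g m.
Arguments eps {S} c.
Arguments idem {S} e.
Arguments omega {S} e f.
Arguments elast {S} c.
Arguments econcat {S} c d.
Arguments erestr {S} h c.
Arguments is_epath {S} c.
Arguments echain_equiv {S} _ _.
Arguments mor_eq {S} m n.
Arguments mor_comp {S} m n.
Arguments is_mor {S} m.

(* Main.v *)
Require Import Defs.
From Stdlib Require Import List Relations.
Import ListNotations.

Section Proofs.
Variable S : RegSemigroup.
Local Notation "a * b" := (mul S a b).

Lemma last_cons (x : S) l d : last (x :: l) d = last l x.
Proof. revert x d; induction l as [|y l IH]; intros x d; [reflexivity|].
  change (last (x :: y :: l) d) with (last (y :: l) d). rewrite !IH. reflexivity. Qed.

Lemma last_app2 (l m : list S) d : last (l ++ m) d = last m (last l d).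
Proof. revert d; induction l as [|x l IH]; intros d; [reflexivity|].
  change ((x :: l) ++ m) with (x :: (l ++ m)). rewrite !last_cons. apply IH. Qed.

Lemma fold_mul (r : list S) a b : fold_left (mul S) r (a * b) = a * fold_left (mul S) r b.
Proof. revert b; induction r as [|z r IH]; intros b; [reflexivity|].
  simpl. rewrite <- mul_assoc. apply IH. Qed.

Definition W (x : S) l := prod_list S x l.
Definition W' (x : S) l := epsw' (x, l).

Lemma W_snoc x l y : W x (l ++ [y]) = W x l * y.
Proof. unfold W, prod_list. rewrite fold_left_app. reflexivity. Qed.

Lemma W'_nil x : W' x [] = x.
Proof. reflexivity. Qed.

Lemma W'_snoc x l y : W' x (l ++ [y]) = y * W' x l.
Proof.
  unfold W', epsw', full. simpl fst. simpl snd.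
  rewrite app_comm_cons, rev_app_distr. simpl rev at 1.
  change ([y] ++ rev (x :: l)) with (y :: rev (x :: l)).
  simpl (rev (x :: l)). destruct (rev l) as [|z r]; unfold prod_list; simpl; [reflexivity|].
  apply fold_mul. Qed.

Lemma green_rel (e f : S) : idem e -> idem f -> (GreenR S e f \/ GreenL S e f) ->
  e * f * e = e /\ f * e * f = f.
Proof.
  unfold idem; intros He Hf [[H1 H2]|[H1 H2]].
  - assert (A : f * e = e).
    { destruct H1 as [E|[u E]]; [subst; auto|]. rewrite E, mul_assoc, Hf. reflexivity. }
    assert (B : e * f = f).
    { destruct H2 as [E|[u E]]; [subst; auto|]. rewrite E, mul_assoc, He. reflexivity. }
    rewrite B, A, B. auto.
  - assert (A : e * f = e).
    { destruct H1 as [E|[u E]]; [subst; auto|]. rewrite E, <- mul_assoc, Hf. reflexivity. }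
    assert (B : f * e = f).
    { destruct H2 as [E|[u E]]; [subst; auto|]. rewrite E, <- mul_assoc, He. reflexivity. }
    rewrite A, He, B, Hf. auto. Qed.

Lemma epath_snoc x l y : epath_from S x (l ++ [y]) <->
  epath_from S x l /\ idem y /\ (GreenR S (last l x) y \/ GreenL S (last l x) y).
Proof.
  revert x; induction l as [|z l IH]; intros x; cbn [app epath_from].
  - simpl. tauto.
  - rewrite IH. rewrite last_cons. tauto. Qed.

Lemma epath_last_idem x l : idem x -> epath_from S x l -> idem (last l x).
Proof.
  revert x; induction l as [|z l IH]; intros x Hx H; [exact Hx|].
  simpl in H. destruct H as [Hz [_ H]]. rewrite last_cons. apply IH; auto. Qed.

Record inv (x : S) l : Prop := {
  ia : W x l * last l x = W x l;
  ib : last l x * W' x l = W' x l;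
  ic : W x l * W' x l = x;
  id : W' x l * W x l = last l x;
  ie : x * W x l = W x l;
  iff' : W' x l * x = W' x l;
  ig : idem (last l x) }.

Lemma inv_ok x l : idem x -> epath_from S x l -> inv x l.
Proof.
  intros Hx. induction l as [|y l IH] using rev_ind; intros H.
  - constructor; rewrite ?W'_nil; unfold W, prod_list; simpl; auto.
  - apply epath_snoc in H. destruct H as [H [Hy Hr]].
    destruct (IH H) as [a b c d e f g].
    destruct (green_rel _ _ g Hy Hr) as [G1 G2].
    unfold idem in Hy.
    constructor; rewrite ?last_last, ?W_snoc, ?W'_snoc.
    + rewrite <- mul_assoc, Hy. reflexivity.
    + rewrite mul_assoc, Hy. reflexivity.
    + rewrite <- mul_assoc, (mul_assoc S y y), Hy.
      rewrite <- a, <- b.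
      transitivity (W x l * (last l x * y * last l x) * W' x l).
      { rewrite !mul_assoc; reflexivity. }
      rewrite G1, a; exact c.
    + rewrite <- mul_assoc, (mul_assoc S (W' x l)), d, mul_assoc. exact G2.
    + rewrite mul_assoc, e. reflexivity.
    + rewrite <- mul_assoc, f. reflexivity.
    + exact Hy. Qed.

Definition P (d : S) (l : list S) : S := match l with [] => d | f :: s => fold_left (mul S) s f end.

Lemma P_mid d a b (x y z : S) : x * y * z = x * z ->
  P d (a ++ [x; y; z] ++ b) = P d (a ++ [x; z] ++ b).
Proof.
  intros H. destruct a as [|f a]; simpl.
  - rewrite H. reflexivity.
  - rewrite !fold_left_app. simpl.
    rewrite <- !(mul_assoc S (fold_left (mul S) a f)). rewrite H. reflexivity. Qed.

Lemma epsw_P (c : epath S) : epsw c = P (fst c) (full c).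
Proof. reflexivity. Qed.
Lemma epsw'_P (c : epath S) : epsw' c = P (fst c) (rev (full c)).
Proof. unfold epsw'. destruct (rev (full c)); reflexivity. Qed.

Lemma all_idem (c : epath S) : is_epath c -> forall v : S, In v (full c) -> idem v.
Proof.
  destruct c as [x l]; unfold is_epath, full; simpl. intros [Hx H].
  revert x Hx H; induction l as [|y l IH]; intros x Hx H v Hv; simpl in *.
  - destruct Hv as [<-|[]]; auto.
  - destruct Hv as [<-|Hv]; auto. destruct H as [Hy [_ H]]. apply (IH y); auto. Qed.

Lemma step_eq (c d : epath S) : echain_step c d -> eps c = eps d.
Proof.
  intros [Hc [Hd [a [b [x [y [z [E1 [E2 Hg]]]]]]]]].
  assert (Ix : idem x) by (apply (all_idem _ Hc); rewrite E1; apply in_or_app; right; simpl; auto).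
  assert (Iy : idem y) by (apply (all_idem _ Hc); rewrite E1; apply in_or_app; right; simpl; auto).
  assert (Iz : idem z) by (apply (all_idem _ Hc); rewrite E1; apply in_or_app; right; simpl; auto).
  unfold idem in *.
  assert (F : fst c = fst d).
  { destruct c as [c0 c1], d as [d0 d1]; unfold full in *; simpl in *.
    destruct a; simpl in *; inversion E1; inversion E2; congruence. }
  assert (K1 : x * y * z = x * z /\ z * y * x = z * x).
  { destruct Hg as [[[R1 R2] [R3 R4]]|[[R1 R2] [R3 R4]]].
    - assert (A1 : x * y = y) by (destruct R2 as [E|[u E]]; [subst; auto|]; rewrite E, mul_assoc, Ix; reflexivity).
      assert (A2 : y * z = z) by (destruct R4 as [E|[u E]]; [subst; auto|]; rewrite E, mul_assoc, Iy; reflexivity).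
      assert (A3 : z * y = y) by (destruct R3 as [E|[u E]]; [subst; auto|]; rewrite E, mul_assoc, Iz; reflexivity).
      assert (A4 : y * x = x) by (destruct R1 as [E|[u E]]; [subst; auto|]; rewrite E, mul_assoc, Iy; reflexivity).
      split.
      + rewrite A1, A2. rewrite <- A2 at 2. rewrite mul_assoc, A1, A2. reflexivity.
      + rewrite A3, A4. rewrite <- A4 at 2. rewrite mul_assoc, A3, A4. reflexivity.
    - assert (A1 : x * y = x) by (destruct R1 as [E|[u E]]; [subst; auto|]; rewrite E, <- mul_assoc, Iy; reflexivity).
      assert (A2 : y * z = y) by (destruct R3 as [E|[u E]]; [subst; auto|]; rewrite E, <- mul_assoc, Iz; reflexivity).
      assert (A3 : z * y = z) by (destruct R4 as [E|[u E]]; [subst; auto|]; rewrite E, <- mul_assoc, Iy; reflexivity).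
      assert (A4 : y * x = y) by (destruct R2 as [E|[u E]]; [subst; auto|]; rewrite E, <- mul_assoc, Ix; reflexivity).
      split; [rewrite A1|rewrite A3]; reflexivity. }
  destruct K1 as [K1 K2].
  unfold eps. f_equal.
  - exact F.
  - unfold elast. rewrite <- (last_cons (fst c) (snd c) (fst c)), <- (last_cons (fst d) (snd d) (fst c)).
    change (fst c :: snd c) with (full c). change (fst d :: snd d) with (full d).
    rewrite E1, E2. change ([x; y; z] ++ b) with ([x; y] ++ z :: b).
    change ([x; z] ++ b) with ([x] ++ z :: b). rewrite !app_assoc, !last_app2, !last_cons. reflexivity.
  - rewrite !epsw_P, E1, E2, F. apply P_mid; auto.
  - rewrite !epsw'_P, E1, E2, F. rewrite !rev_app_distr. simpl rev.
    rewrite <- !app_assoc. simpl app.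
    change ([z; y; x] ++ rev a) with ([z; y; x] ++ rev a).
    pose proof (P_mid (fst d) (rev b) (rev a) z y x K2) as Q. simpl app in Q. exact Q. Qed.

Lemma mor_eq_refl (m : mor S) : mor_eq m m.
Proof. repeat split; auto. Qed.

Lemma W_app (x : S) (l m : list S) : W x l * last l x = W x l -> W x (l ++ m) = W x l * W (last l x) m.
Proof. intros H. unfold W at 1 3, prod_list. rewrite fold_left_app.
  change (fold_left (mul S) l x) with (W x l). rewrite <- fold_mul, H. reflexivity. Qed.

Lemma W'_app (x : S) (l m : list S) : last l x * W' x l = W' x l -> W' x (l ++ m) = W' (last l x) m * W' x l.
Proof.
  intros H. induction m as [|z m IH] using rev_ind.
  - rewrite app_nil_r, W'_nil. auto.
  - rewrite app_assoc, !W'_snoc, IH, mul_assoc. reflexivity. Qed.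

Lemma restr_snoc (p : S) l y : restr_list S p (l ++ [y]) =
  restr_list S p l ++ [y * last (restr_list S p l) p * y].
Proof.
  revert p; induction l as [|e l IH]; intros p; [reflexivity|].
  simpl. rewrite IH. rewrite <- (last_cons (e * p * e) (restr_list S (e * p * e) l) p).
  reflexivity. Qed.


Lemma key (x : S) l y : inv x l -> idem y ->
  (GreenR S (last l x) y \/ GreenL S (last l x) y) -> W x l * y * W' x l = x.
Proof.
  intros [a b c d e f g] Hy Hr. destruct (green_rel _ _ g Hy Hr) as [G1 G2].
  rewrite <- a, <- b.
  transitivity (W x l * (last l x * y * last l x) * W' x l).
  { rewrite !mul_assoc; reflexivity. }
  rewrite G1, a; exact c. Qed.

Lemma restr_inv (x h : S) l : idem x -> idem h -> h * x = h -> x * h = h ->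
  epath_from S x l ->
  last (restr_list S h l) h = W' x l * h * W x l /\
  W h (h :: restr_list S h l) = h * W x l /\
  W' h (h :: restr_list S h l) = W' x l * h.
Proof.
  intros Hx Hh Hhx Hxh. unfold idem in Hh.
  induction l as [|y l IH] using rev_ind; intros H.
  - rewrite W'_nil. change (W x []) with x. simpl.
    change (W h [h]) with (h * h). change (W' h [h]) with (h * h).
    rewrite Hxh, Hhx, Hh. auto.
  - pose proof H as H0. apply epath_snoc in H. destruct H as [H [Hy Hr]].
    destruct (IH H) as [I1 [I2 I3]].
    pose proof (inv_ok x l Hx H) as Iv.
    pose proof (key x l y Iv Hy Hr) as K.
    rewrite restr_snoc. rewrite last_last, W_snoc, W'_snoc.
    rewrite app_comm_cons, W_snoc, W'_snoc, I1, I2, I3.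
    split; [|split].
    + rewrite !mul_assoc. reflexivity.
    + transitivity (h * (W x l * y * W' x l) * h * W x l * y).
      { rewrite !mul_assoc. reflexivity. }
      rewrite K, Hhx, Hh, !mul_assoc. reflexivity.
    + transitivity (y * W' x l * h * (W x l * y * W' x l) * h).
      { rewrite !mul_assoc. reflexivity. }
      rewrite K. rewrite <- (mul_assoc S _ x h), Hxh, <- (mul_assoc S _ h h), Hh. reflexivity.
Qed.

End Proofs.

Theorem mainTheorem4 (S : RegSemigroup) :
  (* well-defined: independent of the representing E-path *)
  (forall c d : epath S, is_epath c -> is_epath d -> echain_equiv c d ->
     mor_eq (eps c) (eps d)) /\
  (* eps(c) is a morphism of G(Gamma_S) from e0 to en *)
  (forall c : epath S, is_epath c ->
     is_mor (eps c) /\ mdom (eps c) = fst c /\ mcod (eps c) = elast c) /\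
  (* identity on objects / identities preserved *)
  (forall e : S, idem e -> mor_eq (eps (e, [])) (mor_id e)) /\
  (* preserves composition *)
  (forall c d : epath S, is_epath c -> is_epath d -> elast c = fst d ->
     mor_eq (eps (econcat c d)) (mor_comp (eps c) (eps d))) /\
  (* commutes with restriction *)
  (forall (c : epath S) (h : S), is_epath c -> idem h -> omega h (fst c) ->
     mor_eq (eps (erestr h c)) (mor_restr h (eps c))).
Proof.
  split; [|split; [|split; [|split]]].
  - intros c d Hc Hd He.
    assert (E : eps c = eps d).
    { clear Hc Hd. induction He as [c d Hs| c | c d _ IH | c d e _ IH1 _ IH2].
      - apply step_eq; exact Hs.
      - reflexivity.
      - symmetry; exact IH.
      - congruence. }
    rewrite E. apply mor_eq_refl.
  - intros [x l] [Hx Hl]. simpl in Hx, Hl.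
    pose proof (inv_ok S x l Hx Hl) as [a b c d e f g].
    split; [|split; reflexivity].
    unfold is_mor, eps, elast; simpl.
    change (epsw (x, l)) with (W S x l). change (epsw' (x, l)) with (W' S x l).
    split; [exact Hx|]. split; [exact g|].
    split; [exists (W S x l); rewrite e, a; reflexivity|].
    split; [exists (W' S x l); rewrite b, f; reflexivity|].
    split; [|split; [exact c|exact d]].
    unfold is_inverse. split.
    + rewrite c, e. reflexivity.
    + rewrite d, b. reflexivity.
  - intros e He. apply mor_eq_refl.
  - intros [x l] [y m] [Hx Hl] _ Hlast. simpl in *. unfold elast in Hlast; simpl in Hlast.
    pose proof (inv_ok S x l Hx Hl) as [a b c d e f g].
    assert (E : eps (econcat (x, l) (y, m)) = mor_comp (eps (x, l)) (eps (y, m))).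
    { unfold econcat, eps, mor_comp, elast; simpl.
      change (epsw (x, l ++ m)) with (W S x (l ++ m)).
      change (epsw (x, l)) with (W S x l).
      change (epsw (y, m)) with (W S y m).
      change (epsw' (x, l ++ m)) with (W' S x (l ++ m)).
      change (epsw' (x, l)) with (W' S x l).
      change (epsw' (y, m)) with (W' S y m).
      rewrite (W_app S x l m a), (W'_app S x l m b), last_app2, Hlast. reflexivity. }
    rewrite E. apply mor_eq_refl.
  - intros [x l] h [Hx Hl] Hh [Ho1 Ho2]. simpl in *.
    unfold omega_l, omega_r in *.
    destruct (restr_inv S x h l Hx Hh Ho1 Ho2 Hl) as [I1 [I2 I3]].
    assert (E : eps (erestr h (x, l)) = mor_restr h (eps (x, l))).
    { unfold erestr, eps, mor_restr, elast; cbn [fst snd mx mx']. rewrite Ho1, last_cons.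
      change (epsw (h, h :: restr_list S h l)) with (W S h (h :: restr_list S h l)).
      change (epsw' (h, h :: restr_list S h l)) with (W' S h (h :: restr_list S h l)).
      change (epsw (x, l)) with (W S x l).
      change (epsw' (x, l)) with (W' S x l).
      rewrite I2, I3, <- I1. reflexivity. }
    rewrite E. apply mor_eq_refl.
Qed.
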